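(* Let $R$ be an abelian ring (an associative ring with identity in which every idempotent is central). Then $R$ is weakly clean if and only if $R$ is weakly $r$-clean.
   Context: For a ring $R$ with identity, $U(R)$ denotes its units, $Idem(R)$ its idempotents, and $Reg(R)=\{r\in R:\ r=ryr \text{ for some } y\in R\}$ its (von Neumann) regular elements. An element $x\in R$ is weakly clean if $x=u+e$ or $x=u-e$ for some $u\in U(R)$, $e\in Idem(R)$; $R$ is weakly clean if all its elements are weakly clean. An element $x\in R$ is weakly $r$-clean if $x=r+e$ or $x=r-e$ for some $r\in Reg(R)$, $e\in Idem(R)$; $R$ is weakly $r$-clean if all its elements are weakly $r$-clean. *)

(* Defs.v *)
From mathcomp Require Import all_boot all_algebra.
Set Implicit Arguments. Unset Strict Implicit. Unset Printing Implicit Defensive.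
Import GRing.Theory.
Local Open Scope ring_scope.

Definition is_unit (R : pzRingType) (u : R) : Prop :=
  exists v : R, u * v = 1 /\ v * u = 1.

Definition is_idem (R : pzRingType) (e : R) : Prop := e * e = e.

Definition is_regular (R : pzRingType) (r : R) : Prop :=
  exists y : R, r = r * y * r.

Definition abelian_ring (R : pzRingType) : Prop :=
  forall e : R, is_idem e -> forall x : R, e * x = x * e.

Definition weakly_clean_elt (R : pzRingType) (x : R) : Prop :=
  exists u e : R, is_unit u /\ is_idem e /\ (x = u + e \/ x = u - e).

Definition weakly_clean (R : pzRingType) : Prop :=
  forall x : R, weakly_clean_elt x.

Definition weakly_r_clean_elt (R : pzRingType) (x : R) : Prop :=
  exists r e : R, is_regular r /\ is_idem e /\ (x = r + e \/ x = r - e).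

Definition weakly_r_clean (R : pzRingType) : Prop :=
  forall x : R, weakly_r_clean_elt x.

(* Main.v *)
Require Import Defs.
From mathcomp Require Import all_boot all_algebra.
Set Implicit Arguments. Unset Strict Implicit. Unset Printing Implicit Defensive.
Import GRing.Theory.
Local Open Scope ring_scope.

Section Aux.
Variable R : pzRingType.
Hypothesis ab : abelian_ring R.

Lemma reg_decomp (r : R) : is_regular r -> exists y e : R,
  [/\ is_idem e, r * y = e, y * r = e, r * e = r & e * y = y].
Proof.
case=> y hr.
have h1 : r * (y * r * y) * r = r by rewrite !mulrA -hr -hr.
have zr : y * r * y * r = y * r by rewrite -!mulrA (mulrA r y r) -hr.
have h2 : (y * r * y) * r * (y * r * y) = y * r * y.
  by rewrite zr !mulrA zr.
set z := y * r * y in h1 h2; clearbody z.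
have ie : is_idem (r * z) by rewrite /is_idem mulrA h1.
have jf : is_idem (z * r) by rewrite /is_idem -mulrA (mulrA r) h1.
have ef : r * z = z * r.
  transitivity (r * z * r * z); first by rewrite h1.
  rewrite -(mulrA r z r) -(ab jf r) -(mulrA (z * r)) -(mulrA z r) -(ab ie r).
  by rewrite !mulrA h2.
exists z, (r * z); split=> //.
- by rewrite ef mulrA h1.
- by rewrite ef h2.
Qed.

Lemma idemC (e : R) : is_idem e -> is_idem (1 - e).
Proof. by move=> he; rewrite /is_idem mulrBl mul1r mulrBr mulr1 he subrr subr0. Qed.

Lemma idemM (a b : R) : is_idem a -> is_idem b -> is_idem (a * b).
Proof.
move=> ha hb; rewrite /is_idem -mulrA (mulrA b) (ab hb a) -mulrA hb mulrA ha //.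
Qed.

Lemma idemD (a b : R) : is_idem a -> is_idem b -> a * b = 0 -> b * a = 0 ->
  is_idem (a + b).
Proof.
move=> ha hb h1 h2; rewrite /is_idem mulrDl !mulrDr ha hb h1 h2 addr0 add0r //.
Qed.

Lemma unit_lem (r y e t : R) : is_idem e -> (forall x, t * x = x * t) -> t * t = 1 ->
  r * y = e -> y * r = e -> r * e = r -> e * y = y -> is_unit (r + (1 - e) * t).
Proof.
move=> ie tc tt ry yr re ey.
have er : e * r = r by rewrite (ab ie).
have ye : y * e = y by rewrite (ab ie) in ey.
have q : (1 - e) * t * ((1 - e) * t) = 1 - e.
  by rewrite -mulrA (mulrA t) (tc (1 - e)) -(mulrA _ t t) tt mulr1 (idemC ie).
have a1 : r * ((1 - e) * t) = 0 by rewrite mulrA mulrBr mulr1 re subrr mul0r.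
have b1 : (1 - e) * t * y = 0 by rewrite -mulrA tc mulrA mulrBl mul1r ey subrr mul0r.
have a2 : y * ((1 - e) * t) = 0 by rewrite mulrA mulrBr mulr1 ye subrr mul0r.
have b2 : (1 - e) * t * r = 0 by rewrite -mulrA tc mulrA mulrBl mul1r er subrr mul0r.
exists (y + (1 - e) * t); split.
- by rewrite mulrDl !mulrDr ry a1 b1 q addr0 add0r addrC subrK.
- by rewrite mulrDl !mulrDr yr a2 b2 q addr0 add0r addrC subrK.
Qed.

End Aux.

Theorem theorem2p8 (R : pzRingType) :
  abelian_ring R -> (weakly_clean R <-> weakly_r_clean R).
Proof.
move=> ab; split=> H x.
- have [u [e [[v [uv vu]] [ie hx]]]] := H x.
  exists u, e; split=> //; exists v; by rewrite uv mul1r.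
have [r [g [hr [ig hx]]]] := H x.
have [y [e [ie ry yr re ey]]] := reg_decomp ab hr.
set s := g + g - 1.
have sc : forall z, s * z = z * s.
  by move=> z; rewrite /s !mulrBl !mulrDl !mulrBr !mulrDr mul1r mulr1 (ab _ ig z).
have ss : s * s = 1.
  rewrite /s mulrBl !mulrDl !mulrBr !mulrDr mul1r !mulr1 ig.
  by rewrite !addrK opprB addrC subrK.
set h := e * g + (1 - e) * (1 - g).
have ih : is_idem h.
  apply: idemD => //; [exact: idemM | apply: idemM => //; exact: idemC | |].
  - rewrite -mulrA (mulrA g) (ab _ ig (1 - e)) -!mulrA (mulrA e).
    by rewrite mulrBr mulr1 ie subrr mul0r.
  - rewrite -mulrA (mulrA (1 - g)) -(ab _ ie (1 - g)) -!mulrA (mulrA (1 - e)).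
    by rewrite mulrBl mul1r ie subrr mul0r.
have key : (1 - e) * s + h = g.
  rewrite /h addrA [_ + e * g]addrC -addrA -mulrDr /s.
  have -> : g + g - 1 + (1 - g) = g by rewrite addrA subrK addrK.
  by rewrite -mulrDl addrC subrK mul1r.
case: hx => ->.
- exists (r + (1 - e) * s), h; split; last split=> //.
    exact: (unit_lem ab ie sc ss ry yr re ey).
  by left; rewrite -addrA key.
- exists (r + (1 - e) * (- s)), h; split; last split=> //.
    apply: (unit_lem ab ie _ _ ry yr re ey); first by move=> z; rewrite mulNr mulrN sc.
    by rewrite mulrN mulNr opprK.
  by right; rewrite mulrN -addrA -opprD key.
Qed.
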